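(* Let $\mathbf A=(A,b,c,V)\in\mathcal B_{\mu,M}(\Omega)$, where $V\in L^1_{\rm loc}(\Omega)$ is nonnegative, let $V_m=\min\{V,m\}$ and $\mathbf A_m=(A,b,c,V_m)$ for $m\in\mathbb N_+$, and let $p\in(1,\infty)$, $q=p/(p-1)$. Then: (i) for every $\varepsilon\in(0,\mu)$ there exists $m_\varepsilon\ge0$ such that $\mathbf A_m\in\mathcal B_{\mu-\varepsilon,M}(\Omega)$ for all $m\ge m_\varepsilon$; (ii) if $\mathbf A\in\mathcal S_p(\Omega)$, then for every $\varepsilon\in(0,\mu_p(\mathbf A))$ there exists $m_{\varepsilon,p}\ge0$ such that $\mathbf A_m\in\mathcal S_p(\Omega)$ and $\mu_p(\mathbf A_m)\ge\mu_p(\mathbf A)-\varepsilon$ for all $m\ge m_{\varepsilon,p}$; moreover $\lim_{m\to\infty}\mu_p(\mathbf A_m)=\mu_p(\mathbf A)$. In particular, if $\mathbf A\in\mathcal B_p(\Omega)$, then $\mathbf A_m\in\mathcal B_p(\Omega)$ for all sufficiently large $m$ (namely $m\ge\max\{m_{\varepsilon,p},m_{\varepsilon,q}\}$).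
   Context: $\Omega\subseteq\mathbb R^d$ nonempty open; $\langle \xi,\sigma\rangle=\sum_j\xi_j\overline{\sigma_j}$. $\mathcal{A}(\Omega)$: measurable $A:\Omega\to\mathbb{C}^{d\times d}$ with $\lambda,\Lambda>0$ such that $\Re\langle A(x)\xi,\xi\rangle\ge\lambda|\xi|^2$, $|\langle A(x)\xi,\sigma\rangle|\le\Lambda|\xi||\sigma|$ a.e. $\mathcal{J}_s\xi=\frac s2(\xi+(1-\frac2s)\overline\xi)$, $\Delta_s(A)=\operatorname{ess\,inf}_{x}\min_{|\xi|=1}\Re\langle A(x)\xi,\xi+|1-2/s|\overline\xi\rangle$, $\mathcal A_s=\{A\in\mathcal A(\Omega):\Delta_s(A)>0\}$, $\Gamma_s^{\mathbf A}(x,\xi)=\Re\langle A\xi,\mathcal J_s\xi\rangle+\Re\langle b+\mathcal J_sc,\xi\rangle+V$, for quadruples $\mathbf A=(A,b,c,V)$ with $A\in\mathcal A(\Omega)$, $b,c\in L^\infty(\Omega;\mathbb C^d)$, $0\le V\in L^1_{\rm loc}(\Omega)$. $\mathcal B_{\mu,M}(\Omega)$ ($\mu\in(0,1]$, $M>0$): such quadruples with $\Gamma_2^{\mathbf A}(x,\xi)\ge\mu(|\xi|^2+V(x))$ and $|b(x)-c(x)|\le M\sqrt{V(x)}$ for a.e. $x$, all $\xi$. $\mathcal S_s(\Omega)$: quadruples with $A\in\mathcal A_s(\Omega)$, $|b-c|\le M'\sqrt V$ a.e. for some $M'>0$, and $\Gamma_s^{\mathbf A}\ge\mu'(|\xi|^2+V)$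 a.e. for some $\mu'>0$; $\mu_s(\mathbf A)$ the largest such $\mu'$. $\mathcal B_p=\mathcal S_p\cap\mathcal S_q$. *)

(* Defs.v *)
From HB Require Import structures.
From mathcomp Require Import all_boot all_order all_algebra.
From mathcomp Require Import all_classical all_reals all_analysis.
From mathcomp Require Import ess_sup_inf.
From mathcomp.real_closed Require Import complex.

Set Implicit Arguments.
Unset Strict Implicit.
Unset Printing Implicit Defensive.

Import Order.TTheory GRing.Theory Num.Theory numFieldNormedType.Exports.

Local Open Scope classical_set_scope.
Local Open Scope ring_scope.

(* Lebesgue measure on R^d = 'rV[R]_d, built as in textbooks:          *)
(* the Lebesgue outer measure is the infimum of sum of volumes of      *)
(* countable covers by half-open boxes; the Lebesgue measurable sets   *)
(* are the Caratheodory-measurable sets for that outer measure.        *)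
Section LebesgueRd.
Variables (R : realType) (d : nat).

Definition box (a b : 'rV[R]_d) : set 'rV[R]_d :=
  [set x | forall i : 'I_d, a ord0 i <= x ord0 i < b ord0 i].

Definition box_vol (a b : 'rV[R]_d) : R :=
  \prod_(i < d) Num.max (b ord0 i - a ord0 i) 0.

Definition boxes : set (set 'rV[R]_d) :=
  [set X | exists a b, X = box a b].

(* volume of a box (the empty set gets volume 0); +oo on sets which are
   not boxes, so that covers effectively range over countable box covers *)
Definition box_content (X : set 'rV[R]_d) : \bar R :=
  ereal_inf [set y | (X = set0 /\ y = 0%E) \/
                     exists a b, X = box a b /\ y = (box_vol a b)%:E].

Lemma box_content_ge0 X : (0 <= box_content X)%E.
Proof.
apply: le_ereal_inf_tmp => y [[_ ->]//|[a [b [_ ->]]]].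
rewrite lee_fin; apply: prodr_ge0 => i _.
by rewrite le_max lexx orbT.
Qed.

Lemma box_content0 : box_content set0 = 0%E.
Proof.
apply/eqP; rewrite eq_le box_content_ge0 andbT.
by apply: ereal_inf_lbound; left.
Qed.

Definition RdB := g_sigma_algebraType boxes.

Definition lebesgue_outer : set RdB -> \bar R :=
  @mu_ext _ RdB R box_content.

HB.instance Definition _ := isOuterMeasure.Build R RdB lebesgue_outer
  (@mu_ext0 _ RdB R box_content box_content0 box_content_ge0)
  (@mu_ext_ge0 _ RdB R box_content box_content_ge0)
  (@le_mu_ext _ RdB R box_content)
  (@mu_ext_sigma_subadditive _ RdB R box_content box_content_ge0).

Definition lebO : {outer_measure set RdB -> \bar R} := lebesgue_outer.

Definition Rd := caratheodory_type lebO.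

Definition leb : {measure set Rd -> \bar R} := (lebO : set Rd -> \bar R).

End LebesgueRd.

Section Complex.
Variables (R : realType) (d : nat).
Local Notation C := (complex R).

Definition rC (x : R) : C := Complex x 0.

Definition cabs (z : C) : R := Num.sqrt (complex.Re z ^+ 2 + complex.Im z ^+ 2).

Definition cinner (xi sigma : 'cV[C]_d) : C :=
  \sum_(j < d) xi j ord0 * conjc (sigma j ord0).

Definition vnorm (xi : 'cV[C]_d) : R :=
  Num.sqrt (\sum_(j < d) cabs (xi j ord0) ^+ 2).

Definition vconj (xi : 'cV[C]_d) : 'cV[C]_d := map_mx (@conjc R) xi.

Definition Jop (s : R) (xi : 'cV[C]_d) : 'cV[C]_d :=
  rC (s / 2) *: (xi + rC (1 - 2 / s) *: vconj xi).

End Complex.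

Record quad (R : realType) (d : nat) := Quad {
  qA : 'rV[R]_d -> 'M[complex R]_d ;
  qb : 'rV[R]_d -> 'cV[complex R]_d ;
  qc : 'rV[R]_d -> 'cV[complex R]_d ;
  qV : 'rV[R]_d -> R }.

Section Classes.
Variables (R : realType) (d : nat) (Omega : set 'rV[R]_d).
Local Notation C := (complex R).
Local Notation leb := (@leb R d).

Definition cmeasurable (f : 'rV[R]_d -> C) : Prop :=
  measurable_fun (Omega : set (Rd R d)) ((fun z => @complex.Re R z) \o f : Rd R d -> R) /\
  measurable_fun (Omega : set (Rd R d)) ((fun z => @complex.Im R z) \o f : Rd R d -> R).

Definition elliptic (A : 'rV[R]_d -> 'M[C]_d) : Prop :=
  (forall i j : 'I_d, cmeasurable (fun x => A x i j)) /\
  exists lam Lam : R, 0 < lam /\ 0 < Lam /\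
    \forall x \ae leb, Omega x ->
      (forall xi : 'cV[C]_d, lam * vnorm xi ^+ 2 <= complex.Re (cinner (A x *m xi) xi)) /\
      (forall xi sigma : 'cV[C]_d,
          cabs (cinner (A x *m xi) sigma) <= Lam * vnorm xi * vnorm sigma).

Definition Linfty (b : 'rV[R]_d -> 'cV[C]_d) : Prop :=
  (forall j : 'I_d, cmeasurable (fun x => b x j ord0)) /\
  exists K : R, \forall x \ae leb, Omega x -> vnorm (b x) <= K.

Definition L1loc_nonneg (V : 'rV[R]_d -> R) : Prop :=
  measurable_fun (Omega : set (Rd R d)) (V : Rd R d -> R) /\
  (\forall x \ae leb, Omega x -> 0 <= V x) /\
  forall K : set 'rV[R]_d, compact K -> K `<=` Omega ->
    leb.-integrable (K : set (Rd R d)) (EFin \o (V : Rd R d -> R)).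

Definition admissible (Q : quad R d) : Prop :=
  elliptic (qA Q) /\ Linfty (qb Q) /\ Linfty (qc Q) /\ L1loc_nonneg (qV Q).

Definition Gamma (s : R) (Q : quad R d) (x : 'rV[R]_d) (xi : 'cV[C]_d) : R :=
  complex.Re (cinner (qA Q x *m xi) (Jop s xi))
  + complex.Re (cinner (qb Q x + Jop s (qc Q x)) xi) + qV Q x.

Definition Bclass (mu M : R) (Q : quad R d) : Prop :=
  0 < mu <= 1 /\ 0 < M /\ admissible Q /\
  \forall x \ae leb, Omega x ->
    (forall xi : 'cV[C]_d, mu * (vnorm xi ^+ 2 + qV Q x) <= Gamma 2 Q x xi) /\
    vnorm (qb Q x - qc Q x) <= M * Num.sqrt (qV Q x).

Definition Delta (s : R) (A : 'rV[R]_d -> 'M[C]_d) : \bar R :=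
  ess_inf leb (fun x : Rd R d =>
    if x \in Omega then
      ereal_inf [set (complex.Re (cinner (A x *m xi)
                        (xi + rC `|1 - 2 / s| *: vconj xi)))%:E
                | xi in [set xi : 'cV[C]_d | vnorm xi = 1]]
    else +oo%E).

Definition Aclass (s : R) (A : 'rV[R]_d -> 'M[C]_d) : Prop :=
  elliptic A /\ (0 < Delta s A)%E.

Definition Gamma_coercive (s mu' : R) (Q : quad R d) : Prop :=
  \forall x \ae leb, Omega x ->
    forall xi : 'cV[C]_d, mu' * (vnorm xi ^+ 2 + qV Q x) <= Gamma s Q x xi.

Definition Sclass (s : R) (Q : quad R d) : Prop :=
  admissible Q /\ Aclass s (qA Q) /\
  (exists M' : R, 0 < M' /\
     \forall x \ae leb, Omega x -> vnorm (qb Q x - qc Q x) <= M' * Num.sqrt (qV Q x)) /\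
  (exists mu' : R, 0 < mu' /\ Gamma_coercive s mu' Q).

Definition mu_s (s : R) (Q : quad R d) : R :=
  sup [set mu' : R | 0 < mu' /\ Gamma_coercive s mu' Q].

End Classes.

Definition truncV (R : realType) (d : nat) (Q : quad R d) (m : nat) : quad R d :=
  Quad (qA Q) (qb Q) (qc Q) (fun x => Num.min (qV Q x) m%:R).

(* Main.v *)
Require Import Defs.
From HB Require Import structures.
From mathcomp Require Import all_boot all_order all_algebra.
From mathcomp Require Import all_classical all_reals all_analysis.
From mathcomp.real_closed Require Import complex.
From mathcomp Require Import lra ring measurable_realfun.
Import Order.TTheory GRing.Theory Num.Theory numFieldNormedType.Exports.
Local Open Scope classical_set_scope.
Local Open Scope ring_scope.


Section CX.
Context {R : realType}.
Implicit Types x y : complex R.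
Lemma ReM x y : complex.Re (x*y) = complex.Re x * complex.Re y - complex.Im x * complex.Im y.
Proof. by case: x y => a b [c e]. Qed.
Lemma ImM x y : complex.Im (x*y) = complex.Re x * complex.Im y + complex.Im x * complex.Re y.
Proof. by case: x y => a b [c e]. Qed.
Lemma ReD x y : complex.Re (x+y) = complex.Re x + complex.Re y.
Proof. by case: x y => a b [c e]. Qed.
Lemma ImD x y : complex.Im (x+y) = complex.Im x + complex.Im y.
Proof. by case: x y => a b [c e]. Qed.
Lemma ReB x y : complex.Re (x-y) = complex.Re x - complex.Re y.
Proof. by case: x y => a b [c e]. Qed.
Lemma ImB x y : complex.Im (x-y) = complex.Im x - complex.Im y.
Proof. by case: x y => a b [c e]. Qed.
Lemma ReJ x : complex.Re (conjc x) = complex.Re x.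
Proof. by case: x. Qed.
Lemma ImJ x : complex.Im (conjc x) = - complex.Im x.
Proof. by case: x. Qed.
Lemma Re0 : complex.Re (0 : complex R) = 0. Proof. by []. Qed.
Lemma RerC (t : R) : complex.Re (rC t) = t. Proof. by []. Qed.
Lemma ImrC (t : R) : complex.Im (rC t) = 0. Proof. by []. Qed.
Lemma conj_rC (t : R) : conjc (rC t) = rC t.
Proof. by rewrite /rC /conjc oppr0. Qed.

Lemma Re_sum (I : Type) (r : seq I) (P : pred I) (F : I -> complex R) :
  complex.Re (\sum_(i <- r | P i) F i) = \sum_(i <- r | P i) complex.Re (F i).
Proof. exact: (big_morph _ ReD Re0). Qed.

Lemma cabs_sq x : cabs x ^+ 2 = complex.Re x ^+ 2 + complex.Im x ^+ 2.
Proof. by rewrite /cabs sqr_sqrtr // addr_ge0 // sqr_ge0. Qed.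
End CX.

Section V.
Context {R : realType} {d : nat}.
Lemma vnorm_sq (u : 'cV[complex R]_d) :
  vnorm u ^+ 2 = \sum_(j < d) (complex.Re (u j ord0) ^+ 2 + complex.Im (u j ord0) ^+ 2).
Proof.
rewrite /vnorm sqr_sqrtr; last by apply: sumr_ge0 => j _; rewrite sqr_ge0.
by apply: eq_bigr => j _; rewrite cabs_sq.
Qed.
Lemma vnorm_ge0 (u : 'cV[complex R]_d) : 0 <= vnorm u.
Proof. exact: sqrtr_ge0. Qed.
Lemma Re_cinner (u v : 'cV[complex R]_d) :
  complex.Re (cinner u v) = \sum_(j < d) (complex.Re (u j ord0) * complex.Re (v j ord0)
     + complex.Im (u j ord0) * complex.Im (v j ord0)).
Proof.
rewrite /cinner Re_sum; apply: eq_bigr => j _.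
rewrite ReM ReJ ImJ; lra.
Qed.
End V.


Section K.
Context {R : realType}.

Lemma quad_lb (eps a b : R) : 0 < eps -> - (eps * b ^+ 2 + a ^+ 2 / (4 * eps)) <= a * b.
Proof.
move=> e0.
have h : 0 <= eps * (b + a / (2 * eps)) ^+ 2 by apply: mulr_ge0; [lra|apply: sqr_ge0].
have e : eps * (b + a / (2 * eps)) ^+ 2 = eps * b ^+ 2 + a * b + a ^+ 2 / (4 * eps).
  by field; lra.
rewrite e in h; lra.
Qed.

Lemma scal_ge (mu' n2 a l C : R) :
  (forall t, 0 < t -> mu' * (t ^+ 2 * n2) <= t ^+ 2 * a + t * l + C) ->
  mu' * n2 <= a.
Proof.
move=> H; rewrite leNgt; apply/negP => hlt.
set del := mu' * n2 - a.
have d0 : 0 < del by rewrite /del; lra.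
set t := (`|l| + `|C| + 1) / del + 1.
have t1 : 1 <= t.
  have : 0 <= (`|l| + `|C| + 1) / del by apply: divr_ge0; [rewrite !addr_ge0 | lra].
  rewrite /t; lra.
have td : `|l| + `|C| + 1 <= t * del.
  by rewrite /t mulrDl divfK ?gt_eqF //; lra.
have := H t (lt_le_trans ltr01 t1).
have hl : - `|l| <= l by exact: lerNnormlW.
have hC : - `|C| <= C by exact: lerNnormlW.
have hC0 : 0 <= `|C| by [].
have hl0 : 0 <= `|l| by [].
have e1 : t * (t * del) >= t * (`|l| + `|C| + 1) by rewrite ler_pM2l //; lra.
have e2 : t * l <= t * `|l| by rewrite ler_pM2l ?ler_norm //; lra.
have hC2 : C <= `|C| by exact: ler_norm.
have e3 : t * `|C| >= `|C| by rewrite ler_peMl.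
have e1' : mu' * (t ^+ 2 * n2) - t ^+ 2 * a >= t * `|l| + t * `|C| + t.
  have -> : mu' * (t ^+ 2 * n2) - t ^+ 2 * a = t * (t * del) by rewrite /del; ring.
  by have -> : t * `|l| + t * `|C| + t = t * (`|l| + `|C| + 1) by ring.
move=> Ht; lra.
Qed.

Lemma key_real (mu' eps V m a l n2 Ku : R) :
  (forall t, mu' * (t ^+ 2 * n2 + V) <= t ^+ 2 * a + t * l + V) ->
  0 <= n2 -> 0 <= V -> 0 < eps < mu' -> 0 <= m ->
  - (eps * n2 + Ku / (4 * eps)) <= l ->
  Ku <= 4 * eps ^+ 2 * m ->
  (mu' - eps) * (n2 + Num.min V m) <= a + l + Num.min V m.
Proof.
move=> H n0 V0 /andP[e0 em] m0 hl hK.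
have H1 := H 1; rewrite expr1n !mul1r in H1.
rewrite /Order.min; case: ifP => hVm.
  nra.
have hmV : m <= V by rewrite leNgt hVm.
case: (eqVneq V m) => [eVm|nVm].
  rewrite -eVm; nra.
have hmV' : m < V by rewrite lt_neqAle eq_sym nVm hmV.
have H0 := H 0; rewrite expr0n /= !mul0r !add0r in H0.
have mu1 : mu' <= 1 by nra.
have ha : mu' * n2 <= a.
  apply: (@scal_ge mu' n2 a l ((1 - mu') * V)) => t _.
  by have := H t; lra.
have hK' : Ku / (4 * eps) <= eps * m.
  rewrite ler_pdivrMr; last lra.
  have -> : eps * m * (4 * eps) = 4 * eps ^+ 2 * m by ring.
  done.
nra.
Qed.
End K.


Section G.
Context {R : realType} {d : nat}.
Local Notation C := (complex R).
Implicit Types (u v xi : 'cV[C]_d) (t s : R).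


Lemma ReM' (x y : C) : complex.Re (x*y) = complex.Re x * complex.Re y - complex.Im x * complex.Im y.
Proof. by case: x y => a b [c e]. Qed.
Lemma ImM' (x y : C) : complex.Im (x*y) = complex.Re x * complex.Im y + complex.Im x * complex.Re y.
Proof. by case: x y => a b [c e]. Qed.
Lemma ReD' (x y : C) : complex.Re (x+y) = complex.Re x + complex.Re y.
Proof. by case: x y => a b [c e]. Qed.
Lemma ImD' (x y : C) : complex.Im (x+y) = complex.Im x + complex.Im y.
Proof. by case: x y => a b [c e]. Qed.
Lemma ReN' (x : C) : complex.Re (- x) = - complex.Re x.
Proof. by case: x. Qed.
Lemma ImN' (x : C) : complex.Im (- x) = - complex.Im x.
Proof. by case: x. Qed.
Lemma ReJ' (x : C) : complex.Re (conjc x) = complex.Re x.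
Proof. by case: x. Qed.
Lemma ImJ' (x : C) : complex.Im (conjc x) = - complex.Im x.
Proof. by case: x. Qed.

Lemma Jop_entry s u j : Jop s u j ord0 = rC (s / 2) * (u j ord0 + rC (1 - 2 / s) * conjc (u j ord0)).
Proof. by rewrite /Jop /vconj !mxE. Qed.

Lemma Jop_scale s t u : Jop s (rC t *: u) = rC t *: Jop s u.
Proof.
apply/matrixP => i j; rewrite !mxE.
rewrite (ord1 j) rmorphM /= oppr0 -/(rC t); ring.
Qed.

Lemma cinner_scalel (k : C) u v : cinner (k *: u) v = k * cinner u v.
Proof. by rewrite /cinner mulr_sumr; apply: eq_bigr => j _; rewrite !mxE mulrA. Qed.

Lemma cinner_scaler (k : C) u v : cinner u (k *: v) = conjc k * cinner u v.
Proof. by rewrite /cinner mulr_sumr; apply: eq_bigr => j _; rewrite !mxE rmorphM /=; ring. Qed.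

Lemma Re_rCM t (z : C) : complex.Re (rC t * z) = t * complex.Re z.
Proof. by case: z => a b /=; rewrite mul0r subr0. Qed.

Definition aG s (Q : quad R d) x xi := complex.Re (cinner (qA Q x *m xi) (Jop s xi)).
Definition lG s (Q : quad R d) x xi := complex.Re (cinner (qb Q x + Jop s (qc Q x)) xi).

Lemma GammaE s Q x xi : Gamma s Q x xi = aG s Q x xi + lG s Q x xi + qV Q x.
Proof. by []. Qed.

Lemma Gamma_scale s Q x t xi :
  Gamma s Q x (rC t *: xi) = t ^+ 2 * aG s Q x xi + t * lG s Q x xi + qV Q x.
Proof.
rewrite GammaE /aG /lG -scalemxAr Jop_scale cinner_scalel cinner_scaler conj_rC.
rewrite cinner_scaler conj_rC -mulrA !Re_rCM; ring.
Qed.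

Lemma vnorm_scale t xi : vnorm (rC t *: xi) ^+ 2 = t ^+ 2 * vnorm xi ^+ 2.
Proof.
rewrite !vnorm_sq mulr_sumr; apply: eq_bigr => j _.
rewrite mxE; case: (xi j ord0) => a b /=; ring.
Qed.

Lemma lG_lb s Q x xi eps : 0 < eps ->
  - (eps * vnorm xi ^+ 2 + vnorm (qb Q x + Jop s (qc Q x)) ^+ 2 / (4 * eps)) <= lG s Q x xi.
Proof.
move=> e0; rewrite /lG Re_cinner !vnorm_sq mulr_suml mulr_sumr -big_split /= -sumrN.
apply: ler_sum => j _.
have h1 := quad_lb eps (complex.Re ((qb Q x + Jop s (qc Q x)) j ord0)) (complex.Re (xi j ord0)) e0.
have h2 := quad_lb eps (complex.Im ((qb Q x + Jop s (qc Q x)) j ord0)) (complex.Im (xi j ord0)) e0.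
rewrite mulrDl; lra.
Qed.

Definition Cs s := (s / 2 * (1 + (1 - 2 / s))) ^+ 2 + (s / 2 * (1 - (1 - 2 / s))) ^+ 2.

Lemma Cs_ge0 s : 0 <= Cs s.
Proof. by rewrite /Cs addr_ge0 // sqr_ge0. Qed.

Lemma vnorm_u_bound s (b c : 'cV[C]_d) :
  vnorm (b + Jop s c) ^+ 2 <= 2 * vnorm b ^+ 2 + 2 * Cs s * vnorm c ^+ 2.
Proof.
rewrite !vnorm_sq !mulr_sumr -big_split /=; apply: ler_sum => j _.
rewrite mxE Jop_entry ReD' ImD' !ReM' !ImM' !ReD' !ImD' !ReM' !ImM' ReJ' ImJ' !RerC !ImrC !mul0r !subr0 !addr0.
rewrite /Cs.
set k := 1 - 2 / s.
set p := complex.Re (b j ord0); set q := complex.Im (b j ord0).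
set x := complex.Re (c j ord0); set y := complex.Im (c j ord0).
set al := s / 2 * (1 + k); set be := s / 2 * (1 - k).
have -> : s / 2 * (x + k * x) = al * x by rewrite /al; ring.
have -> : s / 2 * (y + k * - y) = be * y by rewrite /be; ring.
have h1 : 0 <= (p - al * x) ^+ 2 by apply: sqr_ge0.
have h2 : 0 <= (q - be * y) ^+ 2 by apply: sqr_ge0.
have h3 : 0 <= al ^+ 2 * y ^+ 2 by rewrite mulr_ge0 // sqr_ge0.
have h4 : 0 <= be ^+ 2 * x ^+ 2 by rewrite mulr_ge0 // sqr_ge0.
nra.
Qed.

Lemma vnorm_bc_bound (b c : 'cV[C]_d) :
  vnorm (b - c) ^+ 2 <= 2 * vnorm b ^+ 2 + 2 * vnorm c ^+ 2.
Proof.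
rewrite !vnorm_sq !mulr_sumr -big_split /=; apply: ler_sum => j _.
rewrite !mxE ReD' ImD' ReN' ImN'.
set p := complex.Re (b j ord0); set q := complex.Im (b j ord0).
set x := complex.Re (c j ord0); set y := complex.Im (c j ord0).
have h1 : 0 <= (p + x) ^+ 2 by apply: sqr_ge0.
have h2 : 0 <= (q + y) ^+ 2 by apply: sqr_ge0.
nra.
Qed.
End G.


Definition aeF (R : realType) d : Filter (almost_everywhere (leb R d)) :=
  @ae_filter_ringOfSetsType _ (Rd R d) _ (leb R d).
#[global] Hint Extern 0 (Filter (almost_everywhere (leb _ _))) => (apply: aeF) : typeclass_instances.
#[global] Hint Extern 0 (Filter (nbhs (almost_everywhere (leb _ _)))) => (apply: aeF) : typeclass_instances.

Section M.
Context {R : realType} {d : nat} (Omega : set 'rV[R]_d).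

Lemma le_int_abs (K : set (Rd R d)) (f g : Rd R d -> \bar R) :
  (forall x, (`|f x| <= `|g x|)%E) ->
  (\int[leb R d]_(x in K) `|f x| <= \int[leb R d]_(x in K) `|g x|)%E.
Proof.
move=> fg; rewrite !ge0_integralE //.
apply: le_ereal_sup => _ [h hle <-]; exists h => // x.
apply: le_trans (hle x) _.
rewrite /patch; case: ifP => // _.
Qed.

Lemma adm_trunc (Q : quad R d) (m : nat) :
  admissible Omega Q -> admissible Omega (truncV Q m).
Proof.
case=> hA [hb [hc [mV [V0 iV]]]].
split => //; split => //; split => //; split.
  by apply: measurable_minr => //; exact: measurable_cst.
split.
  apply: (@filterS _ _ (aeF R d) _ _ _ V0) => x hx Ox; rewrite /= le_min hx // ler0n; done.
move=> K cK KO; have iVK := iV K cK KO.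
apply/integrableP; split.
  apply: measurableT_comp => //; apply: measurable_minr; last exact: measurable_cst.
  by apply/measurable_EFinP; exact: (measurable_int _ iVK).
apply: le_lt_trans (_ : (\int[leb R d]_(x in K) `|(EFin \o qV Q) x| < +oo)%E); last first.
  by case/integrableP: iVK.
apply: le_int_abs => x /=; rewrite lee_fin.
rewrite /Order.min; case: ifP => // hlt.
have hmV : m%:R <= qV Q x by rewrite leNgt hlt.
have m0 : (0:R) <= m%:R by rewrite ler0n.
by rewrite !ger0_norm //; lra.
Qed.
End M.


Section C.
Context {R : realType} {d : nat} (Omega : set 'rV[R]_d).
Local Notation F := (almost_everywhere (leb R d)).

Lemma ae2 {P1 P2 Q : set (Rd R d)} :
  (forall x, P1 x -> P2 x -> Q x) ->
  (\forall x \ae leb R d, P1 x) -> (\forall x \ae leb R d, P2 x) ->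
  \forall x \ae leb R d, Q x.
Proof. exact: (filterS2 (aeF R d)). Qed.
Lemma ae3 {P1 P2 P3 Q : set (Rd R d)} :
  (forall x, P1 x -> P2 x -> P3 x -> Q x) ->
  (\forall x \ae leb R d, P1 x) -> (\forall x \ae leb R d, P2 x) ->
  (\forall x \ae leb R d, P3 x) ->
  \forall x \ae leb R d, Q x.
Proof. exact: (filterS3 (aeF R d)). Qed.
Lemma ae4 {P1 P2 P3 P4 Q : set (Rd R d)} :
  (forall x, P1 x -> P2 x -> P3 x -> P4 x -> Q x) ->
  (\forall x \ae leb R d, P1 x) -> (\forall x \ae leb R d, P2 x) ->
  (\forall x \ae leb R d, P3 x) -> (\forall x \ae leb R d, P4 x) ->
  \forall x \ae leb R d, Q x.
Proof.
move=> h f1 f2 f3 f4.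
have f12 : \forall x \ae leb R d, P1 x /\ P2 x.
  by apply: (@ae2 P1 P2 (fun x => P1 x /\ P2 x) _ f1 f2) => x a b; split.
apply: (@ae3 _ P3 P4 Q _ f12 f3 f4) => x [a b] c e; exact: h.
Qed.

Lemma nat_big (c : R) : exists N : nat, forall m, (N <= m)%N -> c <= m%:R.
Proof.
exists (Num.truncn c).+1 => m hm.
apply: le_trans (ltW (Num.Theory.truncnS_gt c)) _; by rewrite ler_nat.
Qed.

Lemma Linfty_sq {b : 'rV[R]_d -> 'cV[complex R]_d} : Linfty Omega b ->
  exists K : R, \forall x \ae leb R d, Omega x -> vnorm (b x) ^+ 2 <= K.
Proof.
case=> _ [K hK]; exists (K ^+ 2).
apply: (@filterS _ _ (aeF R d) _ _ _ hK) => x h Ox.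
have := h Ox; have := vnorm_ge0 (b x); nra.
Qed.

Lemma V_ge0 {Q : quad R d} : admissible Omega Q ->
  \forall x \ae leb R d, Omega x -> 0 <= qV Q x.
Proof. by case=> _ [_ [_ [_ [h _]]]]. Qed.

Lemma coerc_trunc (s mu' eps : R) (Q : quad R d) :
  admissible Omega Q -> 0 < eps < mu' -> Gamma_coercive Omega s mu' Q ->
  exists N : nat, forall m : nat, (N <= m)%N ->
    Gamma_coercive Omega s (mu' - eps) (truncV Q m).
Proof.
move=> adQ he hG.
have [Kb hb] := Linfty_sq (proj1 (proj2 adQ)).
have [Kc hc] := Linfty_sq (proj1 (proj2 (proj2 adQ))).
have hV := V_ge0 adQ.
case/andP: (he) => e0 _.
set Ku := 2 * Kb + 2 * Cs s * Kc.
have [N hN] := nat_big (Ku / (4 * eps ^+ 2)).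
exists N => m hm.
have hKu : Ku <= 4 * eps ^+ 2 * m%:R.
  have := hN m hm; rewrite ler_pdivrMr; last by rewrite mulr_gt0 // exprn_gt0.
  by rewrite mulrC.
rewrite /Gamma_coercive in hG *.
apply: (ae4 _ hG hb hc hV).
  move=> x h1 h2 h3 h4 Ox xi.
  have G1 := h1 Ox; have b1 := h2 Ox; have c1 := h3 Ox; have V1 := h4 Ox.
  rewrite GammaE /=.
  apply: (key_real _ _ _ _ (aG s Q x xi) (lG s Q x xi) _ Ku).
  - move=> t; have := G1 (rC t *: xi).
    by rewrite Gamma_scale vnorm_scale.
  - exact: sqr_ge0.
  - exact: V1.
  - exact: he.
  - by rewrite ler0n.
  - apply: le_trans _ (lG_lb s Q x xi eps e0).
    rewrite lerN2 lerD2l ler_pM2r ?invr_gt0 ?mulr_gt0 //.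
    apply: le_trans (vnorm_u_bound s (qb Q x) (qc Q x)) _.
    rewrite /Ku; have := Cs_ge0 s; nra.
  - exact: hKu.
Qed.
End C.


Section D.
Context {R : realType} {d : nat} (Omega : set 'rV[R]_d).

Lemma sub_real (mu' n2 a l V m : R) : 0 <= V -> 0 < m ->
  (forall t, mu' * (t ^+ 2 * n2 + Num.min V m) <= t ^+ 2 * a + t * l + Num.min V m) ->
  mu' * (n2 + V) <= a + l + V.
Proof.
move=> V0 m0 H.
have H0 := H 0; have H1 := H 1.
rewrite expr0n /= !mul0r !add0r in H0.
rewrite expr1n !mul1r in H1.
move: H0 H1; rewrite /Order.min; case: ifP => hVm H0 H1; first by [].
have hmV : m <= V by rewrite leNgt hVm.
have mu1 : mu' <= 1 by rewrite -(ler_pM2r m0) mul1r.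
nra.
Qed.

Lemma coerc_sub (s mu' : R) (Q : quad R d) (m : nat) : (0 < m)%N ->
  admissible Omega Q -> Gamma_coercive Omega s mu' (truncV Q m) ->
  Gamma_coercive Omega s mu' Q.
Proof.
move=> m0 adQ hG; rewrite /Gamma_coercive in hG *.
apply: (ae2 _ hG (V_ge0 Omega adQ)) => x h1 h2 Ox xi.
apply: (sub_real _ _ _ _ _ (m%:R) (h2 Ox)); first by rewrite ltr0n.
move=> t; have := h1 Ox (rC t *: xi).
by rewrite Gamma_scale vnorm_scale.
Qed.

Lemma bc_trunc (M : R) (Q : quad R d) : admissible Omega Q -> 0 < M ->
  exists N : nat, forall m : nat, (N <= m)%N ->
    \forall x \ae leb R d, Omega x ->
      vnorm (qb Q x - qc Q x) <= M * Num.sqrt (qV Q x) ->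
      vnorm (qb Q x - qc Q x) <= M * Num.sqrt (Num.min (qV Q x) m%:R).
Proof.
move=> adQ M0.
have [Kb hb] := Linfty_sq Omega (proj1 (proj2 adQ)).
have [Kc hc] := Linfty_sq Omega (proj1 (proj2 (proj2 adQ))).
set K := 2 * Kb + 2 * Kc.
have [N hN] := nat_big (K / M ^+ 2).
exists N => m hm.
have hK : K <= M ^+ 2 * m%:R.
  have := hN m hm; rewrite ler_pdivrMr; last by rewrite exprn_gt0.
  by rewrite mulrC.
apply: (ae2 _ hb hc) => x h1 h2 Ox hV.
have b1 := h1 Ox; have c1 := h2 Ox.
have hv := vnorm_bc_bound (qb Q x) (qc Q x).
have v0 := vnorm_ge0 (qb Q x - qc Q x).
have hsm : (M * Num.sqrt m%:R) ^+ 2 = M ^+ 2 * m%:R by rewrite exprMn sqr_sqrtr // ler0n.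
have w0 : 0 <= M * Num.sqrt m%:R by rewrite mulr_ge0 // ?sqrtr_ge0 // ltW.
have hm' : vnorm (qb Q x - qc Q x) <= M * Num.sqrt m%:R.
  set v := vnorm _ in hv v0 hV *; set w := M * _ in hsm w0 *.
  have : v ^+ 2 <= w ^+ 2 by rewrite hsm; rewrite /K in hK; lra.
  nra.
by rewrite /Order.min; case: ifP.
Qed.
End D.


Section E.
Context {R : realType} {d : nat} (Omega : set 'rV[R]_d).

Lemma Sclass_trunc (s : R) (Q : quad R d) : Sclass Omega s Q ->
  exists N : nat, forall m : nat, (0 < m)%N -> (N <= m)%N -> Sclass Omega s (truncV Q m).
Proof.
case=> adQ [hA [[M' [M0 hM]]] [mu' [mu0 hG]]].
have [N1 hN1] := bc_trunc Omega M' Q adQ M0.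
have he : 0 < mu' / 2 < mu' by apply/andP; split; lra.
have [N2 hN2] := coerc_trunc Omega s mu' (mu' / 2) Q adQ he hG.
exists (maxn N1 N2) => m m0; rewrite geq_max => /andP[h1 h2].
split; first exact: adm_trunc.
split; first exact: hA.
split.
  exists M'; split => //.
  by apply: (ae2 _ hM (hN1 m h1)) => x a b Ox; exact: (b Ox (a Ox)).
exists (mu' - mu' / 2); split; first lra.
exact: hN2.
Qed.

Lemma coerc_super (s y mu' : R) (Q : quad R d) (m : nat) :
  admissible Omega Q -> 1 < y -> Gamma_coercive Omega s y Q ->
  Gamma_coercive Omega s mu' Q -> Gamma_coercive Omega s mu' (truncV Q m).
Proof.
move=> adQ y1 hy hmu; rewrite /Gamma_coercive in hy hmu *.
apply: (ae3 _ hy hmu (V_ge0 Omega adQ)) => x h1 h2 h3 Ox xi.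
have V0 := h3 Ox.
have := h1 Ox (rC 0 *: xi); rewrite Gamma_scale vnorm_scale expr0n /= !mul0r !add0r => hV.
have E : qV (truncV Q m) x = qV Q x.
  have V00 : qV Q x = 0 by nra.
  rewrite /= V00 /Order.min; case: ifP => // /negbT.
  by rewrite -leNgt (_ : (0:R) = 0%:R) // ler_nat leqn0 => /eqP ->.
rewrite GammaE E; have E2 : Num.min (qV Q x) m%:R = qV Q x := E; rewrite E2; have := h2 Ox xi; rewrite GammaE; exact.
Qed.

Definition Sset (s : R) (Q : quad R d) := [set mu' : R | 0 < mu' /\ Gamma_coercive Omega s mu' Q].

Lemma mu_sE s Q : mu_s Omega s Q = sup (Sset s Q). Proof. by []. Qed.

Lemma mu_s_approx (s : R) (Q : quad R d) : Sclass Omega s Q ->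
  forall eps : R, 0 < eps -> exists N : nat, forall m : nat, (0 < m)%N -> (N <= m)%N ->
   mu_s Omega s Q - eps <= mu_s Omega s (truncV Q m) <= mu_s Omega s Q.
Proof.
case=> adQ [_ [_ [mu0' [mu00 hG0]]]] eps e0.
have S0 : Sset s Q mu0' by split.
have F1 : forall m, (0 < m)%N -> Sset s (truncV Q m) `<=` Sset s Q.
  move=> m m0 z [z0 hz]; split => //; exact: coerc_sub hz.
have [hS|hS] := pselect (has_sup (Sset s Q)); last first.
  have [y [y0 hy] y1] := (has_supPn (ex_intro _ mu0' S0)).1 hS 1.
  exists 1%N => m m0 _.
  rewrite !mu_sE.
  have -> : Sset s (truncV Q m) = Sset s Q.
    apply/seteqP; split; first exact: F1.
    move=> z [z0 hz]; split => //; exact: (coerc_super s y z Q m adQ y1 hy hz).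
  apply/andP; split; last exact: lexx.
  by rewrite lerBlDr lerDl ltW.
have ub : forall m, (0 < m)%N -> ubound (Sset s (truncV Q m)) (sup (Sset s Q)).
  by move=> m m0 z /(F1 m m0) hz; exact: sup_upper_bound.
have supS0 : 0 < sup (Sset s Q).
  by apply: lt_le_trans mu00 _; exact: sup_upper_bound.
have e2 : 0 < eps / 2 by lra.
have [e [e0' he] hle] := @sup_adherent _ (Sset s Q) (eps / 2) e2 hS.
set eps' := Num.min (eps / 2) (e / 2).
have hm2 : eps' <= e / 2 /\ eps' <= eps / 2 /\ 0 < eps'.
  rewrite /eps' /Order.min; case: ifP => h.
    by have := ltW h; split; [lra|split; lra].
  have h' : e / 2 <= eps / 2 by rewrite leNgt h.
  split; [lra|split; lra].

have hp : 0 < eps' < e by apply/andP; split; lra.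
have [N hN] := coerc_trunc Omega s e eps' Q adQ hp he.
exists N => m m0 hm; rewrite !mu_sE.
have Sm : Sset s (truncV Q m) (e - eps') by split; [lra | exact: hN].
have hsm : has_sup (Sset s (truncV Q m)).
  by split; [exists (e - eps') | exists (sup (Sset s Q)); exact: ub].
have h1 := sup_upper_bound hsm Sm.
have h2 : sup (Sset s (truncV Q m)) <= sup (Sset s Q).
  by apply: ge_sup; [exists (e - eps') | exact: ub].
apply/andP; split; lra.
Qed.
End E.

Theorem lemmaC1 (R : realType) (d : nat) (Omega : set 'rV[R]_d)
    (Q : quad R d) (mu M p : R) :
  open Omega -> Omega !=set0 ->
  Bclass Omega mu M Q ->
  1 < p ->
  let q := p / (p - 1) in
  (* (i) *)
  (forall eps : R, 0 < eps < mu ->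
     exists m_eps : nat, forall m : nat, (0 < m)%N -> (m_eps <= m)%N ->
       Bclass Omega (mu - eps) M (truncV Q m)) /\
  (* (ii) *)
  (Sclass Omega p Q ->
     (forall eps : R, 0 < eps < mu_s Omega p Q ->
        exists m_eps_p : nat, forall m : nat, (0 < m)%N -> (m_eps_p <= m)%N ->
          Sclass Omega p (truncV Q m) /\
          mu_s Omega p Q - eps <= mu_s Omega p (truncV Q m)) /\
     (mu_s Omega p (truncV Q m) @[m --> \oo] --> mu_s Omega p Q)) /\
  (* in particular: B_p = S_p /\ S_q is preserved for large m *)
  (Sclass Omega p Q -> Sclass Omega q Q ->
     exists N : nat, forall m : nat, (0 < m)%N -> (N <= m)%N ->
       Sclass Omega p (truncV Q m) /\ Sclass Omega q (truncV Q m)).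
Proof.
move=> _ _ hB _ q; split; [|split].
- move=> eps /andP[e0 emu].
  case: hB => /andP[mu0 mu1] [M0 [adQ hB]].
  have hG : Gamma_coercive Omega 2 mu Q.
    by apply: (ae2 _ hB hB) => x h _ Ox; exact: (h Ox).1.
  have hbc : \forall x \ae leb R d, Omega x ->
      vnorm (qb Q x - qc Q x) <= M * Num.sqrt (qV Q x).
    by apply: (ae2 _ hB hB) => x h _ Ox; exact: (h Ox).2.
  have [N1 hN1] := bc_trunc Omega M Q adQ M0.
  have he : 0 < eps < mu by apply/andP; split.
  have [N2 hN2] := coerc_trunc Omega 2 mu eps Q adQ he hG.
  exists (maxn N1 N2) => m m0; rewrite geq_max => /andP[h1 h2].
  split; first by apply/andP; split; lra.
  split => //; split; first exact: adm_trunc.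
  apply: (ae3 _ (hN2 m h2) hbc (hN1 m h1)) => x g b1 b2 Ox.
  by split; [exact: g Ox | exact: b2 Ox (b1 Ox)].
- move=> hS; split.
  + move=> eps /andP[e0 emu].
    have [N1 hN1] := Sclass_trunc Omega p Q hS.
    have [N2 hN2] := mu_s_approx Omega p Q hS eps e0.
    exists (maxn N1 N2) => m m0; rewrite geq_max => /andP[h1 h2].
    split; first exact: hN1.
    by case/andP: (hN2 m m0 h2).
  + apply/cvgrPdist_le => eps e0.
    have [N hN] := mu_s_approx Omega p Q hS eps e0.
    apply: filterS (nbhs_infty_gt N) => m hm.
    have /andP[a b] := hN m (leq_ltn_trans (leq0n N) hm) (ltnW hm).
    rewrite ler_norml; apply/andP; split; lra.
- move=> hp hq.
  have [N1 h1] := Sclass_trunc Omega p Q hp.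
  have [N2 h2] := Sclass_trunc Omega q Q hq.
  exists (maxn N1 N2) => m m0; rewrite geq_max => /andP[a b].
  by split; [exact: h1 | exact: h2].
Qed.
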